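(* Let $r\ge 1$ and let $T=T_E=(p_1,\ldots,p_{r-1})$ be an untwisted multiplicity tree of a local Arf good semigroup $S(T)\subseteq\mathbb{N}^r$, where $E=\{M_1,\ldots,M_r\}$ is the ordered collection of multiplicity sequences along its branches. Then $$ g(S(T))=\sum_{k=1}^r g(\mathrm{AS}(M_k))+\sum_{k=1}^{r-1}p_k, $$ where $\mathrm{AS}(M_k)$ is the Arf numerical semigroup associated to $M_k$.
   Context: A multiplicity sequence is a nonincreasing sequence $(m_n)_{n\ge1}$ of positive integers, eventually equal to $1$, such that for every $n$ there is $l(n)\ge n+1$ with $m_n=\sum_{k=n+1}^{l(n)}m_k$. It is written $M=[m_1,\ldots,m_k]$ with $m_k$ its last entry different from $1$ (and $M=[1]$ for the constant sequence); $l(M)=k$ is its length and $M[i]=m_i$. Its associated Arf numerical semigroup is $\mathrm{AS}(M)=\{0,m_1,m_1+m_2,\ldots,m_1+\cdots+m_k\}\cup\{n: n\ge m_1+\cdots+m_k\}$ (and $\mathrm{AS}([1])=\mathbb{N}$). The genus of a numerical semigroup $S$ is $|\mathbb{N}\setminus S|$. A good semigroup $S\subseteq\mathbb{N}^r$ is a submonoid of $(\mathbb{N}^r,+)$ such that: (i) $\min(a,b)\in S$ (componentwise) for $a,b\in S$; (ii) if $a,b\in S$ with $a[i]=b[i]$, there is $c\in S$ with $c[i]>a[i]$, $c[j]\ge\min(a[j],b[j])$ for $j\ne i$, and $c[j]=\min(a[j],b[j])$ whenever $a[j]\ne b[j]$; (iii) there is $\delta$ with $\delta+\mathbb{N}^r\subseteq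 S$. The minimal such $\delta=(c[1],\ldots,c[r])$ is the conductor. $S$ is local if $\mathbf 0$ is the only element of $S$ with some zero coordinate, and Arf if $\{\beta\in S:\beta\ge\alpha\}-\alpha$ is a semigroup for every $\alpha\in S$ (usual partial order on $\mathbb{N}^r$). The genus of a good semigroup $S$ with conductor $\delta$ is $g(S)=\sum_{k=1}^r c[k]-d(S\setminus C)$, where $C=\delta+\mathbb{N}^r$ and $d(S\setminus C)$ is the length $n$ of a saturated chain $\mathbf 0=s_0<s_1<\cdots<s_n=\delta$ in $S$ (one that cannot be refined inside $S$). The multiplicity tree of a local Arf good semigroup $S\subseteq\mathbb{N}^r$ is a rooted tree with $r$ branches whose nodes $\mathbf n_i^j\in\mathbb{N}^r$ (node on branch $i$, level $j$; all branches share the root at level 1) satisfy $S=\{\mathbf 0\}\cup\{\sum_{\mathbf n\in T'}\mathbf n : T'$ a finite subtree rooted at the root$\}$; the $i$-th coordinates of the nodes along branch $i$ form a multiplicity sequence $M_i$, and $\mathbf n_i^j[h]=0$ iff the node is not on branch $h$. Such a tree is described by $E=\{M_1,\ldots,M_r\}$ and the numbers $p_{i,j}$ = highest level at which branches $i$ and $j$ are glued. The tree is untwisted if $p_{i,j}=\min\{p_{i,i+1},\ldots,p_{j-1,j}\}$ for all $i<j$; it is then denoted $T_E=(p_1,\ldots,p_{r-1})$ with $p_i=p_{i,i+1}$, and $S(T)$ denotes the associated semigroup. *)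

(* Defs.v *)
From mathcomp Require Import all_boot.
Set Implicit Arguments. Unset Strict Implicit. Unset Printing Implicit Defensive.

Definition vec (r : nat) := 'I_r -> nat.

Section Vectors.
Variable r : nat.
Implicit Types a b x d : vec r.

Definition vle a b := forall i, a i <= b i.
Definition vlt a b := vle a b /\ exists i, a i < b i.
Definition vadd a b : vec r := fun i => a i + b i.
Definition vmin a b : vec r := fun i => minn (a i) (b i).
Definition vzero : vec r := fun _ => 0.

Definition good_semigroup (S : vec r -> Prop) : Prop :=
  [/\ S vzero,
      (forall a b, S a -> S b -> S (vadd a b)),
      (forall a b, S a -> S b -> S (vmin a b)),
      (forall a b i, S a -> S b -> a i = b i ->
         exists c, [/\ S c, a i < c i &
           forall j, j != i ->
             minn (a j) (b j) <= c j /\ (a j != b j -> c j = minn (a j) (b j))])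
    & exists d, forall x, vle d x -> S x].

Definition local_sg (S : vec r -> Prop) : Prop :=
  forall a, S a -> (exists i, a i = 0) -> forall i, a i = 0.

(* Arf: {beta in S | beta >= alpha} - alpha is a semigroup for all alpha in S *)
Definition arf_sg (S : vec r -> Prop) : Prop :=
  forall al be ga, S al -> S be -> S ga -> vle al be -> vle al ga ->
    S (fun i => be i + ga i - al i).

Definition conductor_vec (S : vec r -> Prop) d := forall x, vle d x -> S x.

Definition conductor (S : vec r -> Prop) d :=
  conductor_vec S d /\ forall d', conductor_vec S d' -> vle d d'.

Definition sat_chain (S : vec r -> Prop) d (n : nat) (s : nat -> vec r) :=
  [/\ forall i, s 0 i = 0,
      forall i, s n i = d i,
      forall k, k <= n -> S (s k)
    & forall k, k < n ->
        vlt (s k) (s k.+1) /\ ~ (exists t, [/\ S t, vlt (s k) t & vlt t (s k.+1)])].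

(* g(S) = sum_k c[k] - d(S \ C) equals g *)
Definition good_genus (S : vec r -> Prop) (g : nat) : Prop :=
  (exists d n s, conductor S d /\ sat_chain S d n s) /\
  (forall d n s, conductor S d -> sat_chain S d n s -> g = \sum_(k < r) d k - n).

End Vectors.

(* multiplicity sequences, indexed from 1 (the value at 0 is irrelevant) *)
Definition is_mult_seq (m : nat -> nat) : Prop :=
  [/\ forall n, 0 < n -> 0 < m n,
      forall n, 0 < n -> m n.+1 <= m n,
      exists N, forall n, N <= n -> m n = 1
    & forall n, 0 < n -> exists l, n < l /\ m n = \sum_(n.+1 <= k < l.+1) m k].

Definition psum (m : nat -> nat) (j : nat) := \sum_(1 <= i < j.+1) m i.

Definition mlength (m : nat -> nat) (k : nat) : Prop :=
  (forall i, k < i -> m i = 1) /\ (k = 0 \/ m k <> 1).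

Definition AS (m : nat -> nat) (x : nat) : Prop :=
  exists k, mlength m k /\
    ((exists j, j <= k /\ x = psum m j) \/ psum m k <= x).

Definition ns_genus (S : nat -> Prop) (g : nat) : Prop :=
  exists s : seq nat, [/\ uniq s, forall x, x \in s <-> ~ S x & size s = g].

(* Untwisted tree T_E = (p_1,...,p_{r-1}); branches are 0-indexed, p k is the
   level at which branches k and k+1 are glued, and for i < j
   p_{i,j} = min {p_i, ..., p_{j-1}}. *)
Definition pij (p : nat -> nat) (i j : nat) : nat := \big[minn/p i]_(i <= k < j) p k.

Definition glued (p : nat -> nat) (j i h : nat) : bool :=
  (i == h) || (j <= pij p (minn i h) (maxn i h)).

(* A finite subtree rooted at the root, given by U j i = "the node at level j
   on branch i belongs to the subtree"; all levels are >= N are empty. *)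
Definition rooted_subtree (r : nat) (p : nat -> nat) (U : nat -> 'I_r -> bool) (N : nat) :=
  [/\ forall i, U 1 i,
      forall j i, 0 < j -> U j.+1 i -> U j i,
      forall j i, N <= j -> U j i = false
    & forall j (i h : 'I_r), 0 < j -> glued p j i h -> U j i = U j h].

(* S(T): the node at level j on branch i has h-coordinate M_h[j] if it lies
   on branch h, and 0 otherwise; so the h-coordinate of the sum of the nodes
   of a subtree U is the sum of M_h[j] over the levels j with U j h. *)
Definition tree_semigroup (r : nat) (M : 'I_r -> nat -> nat) (p : nat -> nat)
  (x : vec r) : Prop :=
  (forall i, x i = 0) \/
  exists U N, rooted_subtree p U N /\
    forall h, x h = \sum_(1 <= j < N) (if U j h then M h j else 0).

(* Main.v *)
Require Import Defs.
From mathcomp Require Import all_boot zify.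
Set Implicit Arguments. Unset Strict Implicit. Unset Printing Implicit Defensive.

Lemma psum0 m : psum m 0 = 0. Proof. by rewrite /psum big_geq. Qed.
Lemma psumS m j : psum m j.+1 = psum m j + m j.+1.
Proof. by rewrite /psum big_nat_recr. Qed.

Section Psum.
Variable m : nat -> nat.
Hypothesis mpos : forall i, 0 < i -> 0 < m i.

Lemma psum_mono a b : a <= b -> psum m a + (b - a) <= psum m b.
Proof.
elim: b => [|b IH] Hab.
  by move: Hab; rewrite leqn0 => /eqP ->; rewrite subnn addn0.
case: (ltngtP a b.+1) Hab => // [Hlt|->] _; last by rewrite subnn addn0.
have := IH Hlt; have := mpos (ltn0Sn b); rewrite psumS; lia.
Qed.

Lemma psum_lt a b : a < b -> psum m a < psum m b.
Proof. move=> H; have := psum_mono (ltnW H); lia. Qed.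

Lemma psum_leE a b : (psum m a <= psum m b) = (a <= b).
Proof.
apply/idP/idP => H.
  by rewrite leqNgt; apply/negP => /psum_lt; lia.
by have := psum_mono H; lia.
Qed.

Lemma psum_inj a b : psum m a = psum m b -> a = b.
Proof.
move=> H; have h1 : a <= b by rewrite -psum_leE H.
have h2 : b <= a by rewrite -psum_leE H.
lia.
Qed.

Lemma psum_ge j : j <= psum m j.
Proof. have := psum_mono (leq0n j); rewrite psum0; lia. Qed.

Lemma psum_tail l j : (forall i, l < i -> m i = 1) -> l <= j ->
  psum m j = psum m l + (j - l).
Proof.
move=> H1; elim: j => [|j IH] Hl.
  by move: Hl; rewrite leqn0 => /eqP ->; rewrite subnn addn0.
case: (ltngtP l j.+1) Hl => // [Hlt|->] _; last by rewrite subnn addn0.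
rewrite psumS IH // H1 //; lia.
Qed.

Lemma mlength_uniq k1 k2 : mlength m k1 -> mlength m k2 -> k1 = k2.
Proof.
move=> [A1 B1] [A2 B2].
case: (ltngtP k1 k2) => // H.
  case: B2 => B2; [lia| by case: B2; apply: A1].
case: B1 => B1; [lia| by case: B1; apply: A2].
Qed.

Lemma mlength_ex N : (forall n, N <= n -> m n = 1) -> exists k, mlength m k.
Proof.
elim: N => [|N IH] H.
  by exists 0; split; [move=> i _; apply: H|left].
case: (m N =P 1) => HN.
  apply: IH => n; rewrite leq_eqVlt => /orP[/eqP<-//|]; apply: H.
by exists N; split; [move=> i Hi; apply: H | right].
Qed.

Lemma AS_iff l x : mlength m l ->
  AS m x <-> (exists j, j <= l /\ x = psum m j) \/ psum m l <= x.
Proof.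
move=> Hl; split.
  by move=> [k [Hk H]]; rewrite -(mlength_uniq Hk Hl).
by move=> H; exists l.
Qed.

Lemma genus_AS l g : mlength m l -> ns_genus (AS m) g -> g = psum m l - l.
Proof.
move=> Hl [s [Us Hs <-]].
set P := psum m l.
set I := [seq psum m j | j <- iota 0 l].
set G := [seq x <- iota 0 P | x \notin I].
have injp : injective (psum m) by move=> a b; apply: psum_inj.
have memI x : x \in I -> x < P.
  by move/mapP => [j]; rewrite mem_iota add0n => Hj ->; apply: psum_lt.
have sG : s =i G.
  move=> x; rewrite mem_filter mem_iota add0n.
  apply/idP/idP.
    move/Hs => H; apply/andP; split.
      apply/negP => /mapP [j]; rewrite mem_iota add0n => Hj Hx.
      by apply: H; apply/(AS_iff _ Hl); left; exists j; split => //; lia.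
    rewrite ltnNge; apply/negP => HP; apply: H; apply/(AS_iff _ Hl); by right.
  move=> /andP [HI HxP]; apply/Hs => /(AS_iff _ Hl) [[j [Hj Hx]]|HP].
    move: Hj; rewrite leq_eqVlt => /orP [/eqP Hj|Hj].
      by move: HxP; rewrite Hx Hj ltnn.
    move/negP: HI; apply; apply/mapP; exists j => //; rewrite mem_iota; lia.
  move: HxP; rewrite ltnNge HP //.
have -> : size s = size G.
  apply: perm_size; apply: uniq_perm => //.
  by apply: filter_uniq; apply: iota_uniq.
rewrite size_filter.
have := count_predC (mem I) (iota 0 P); rewrite size_iota.
have -> : count (mem I) (iota 0 P) = l.
  rewrite -size_filter.
  have -> : l = size I by rewrite size_map size_iota.
  apply: perm_size; apply: uniq_perm.
  - by apply: filter_uniq; apply: iota_uniq.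
  - by rewrite map_inj_uniq // iota_uniq.
  move=> x; rewrite mem_filter mem_iota add0n /=.
  by case HI: (x \in I) => //=; apply: memI.
move=> E.
have -> : count (fun x => x \notin I) (iota 0 P) = count (predC (mem I)) (iota 0 P) by [].
lia.
Qed.

End Psum.

Lemma down_closed (f : nat -> bool) : (forall j, 0 < j -> f j.+1 -> f j) ->
  forall N j, f N -> 0 < j -> j <= N -> f j.
Proof.
move=> Hd; elim=> [|N IH] j HN Hj HjN; first lia.
case: (ltngtP j N.+1) HjN => // [Hlt|->] _; last by [].
have HN0 : 0 < N by lia.
apply: (IH j (Hd N HN0 HN) Hj); lia.
Qed.

Lemma cut_char (f : nat -> bool) : (forall j, 0 < j -> f j.+1 -> f j) ->
  forall N, (forall j, N <= j -> 0 < j -> f j = false) ->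
  exists c, (c = 0 \/ c < N) /\ forall j, 0 < j -> f j = (j <= c).
Proof.
move=> Hd; elim=> [|N IH] H.
  by exists 0; split; [left|move=> j Hj; rewrite H //; lia].
case HN: (f N && (0 < N)).
  move/andP: HN => [HN HN0].
  exists N; split; first by right.
  move=> j Hj; case: (leqP j N) => HjN.
    by apply: (down_closed Hd HN).
  by apply: H.
case: (IH _) => [j Hj Hj0|c [Hc1 Hc2]].
  move: Hj; rewrite leq_eqVlt => /orP [/eqP Ej|Hj].
    by subst j; move: HN; rewrite Hj0 andbT => /negbT/negPf.
  by apply: H.
by exists c; split => //; lia.
Qed.

Lemma sum_cut (m : nat -> nat) c N : (c = 0 \/ c < N) ->
  \sum_(1 <= j < N) (if j <= c then m j else 0) = psum m c.
Proof.
case=> [->|HcN].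
  rewrite psum0 big_nat_cond big1 // => j /andP [/andP [Hj _] _].
  by rewrite leqn0; case: j Hj.
rewrite (@big_cat_nat _ _ _ c.+1) //=.
have -> : \sum_(c.+1 <= j < N) (if j <= c then m j else 0) = 0.
  by rewrite big_nat_cond big1 // => j /andP [/andP [Hj _] _]; rewrite leqNgt Hj.
rewrite addn0 /psum; apply: eq_big_nat => j /andP [_ Hj].
by rewrite -ltnS Hj.
Qed.

Lemma psum_one c : psum (fun _ => 1) c = c.
Proof. by elim: c => [|c IH]; rewrite ?psum0 // psumS IH addn1. Qed.

Section Tree.
Variable n : nat.
Variable p : nat -> nat.
Variable M : 'I_n.+1 -> nat -> nat.
Hypothesis Mpos : forall h i, 0 < i -> 0 < M h i.
Hypothesis ppos : forall k, k < n -> 1 <= p k.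

Definition consD (D : nat -> nat) :=
  forall k, k < n -> minn (D k) (p k) = minn (D k.+1) (p k).

Lemma consD_range D a b c : consD D -> a <= b -> b <= n ->
  (forall t, a <= t < b -> c <= p t) -> minn (D a) c = minn (D b) c.
Proof.
move=> HD; elim: b => [|b IH] Hab Hbn Ht.
  by move: Hab; rewrite leqn0 => /eqP ->.
case: (ltngtP a b.+1) Hab => // [Hlt|->] _; last by [].
have E1 := IH Hlt (ltnW Hbn) (fun t Ht' => Ht t (ltac:(lia))).
have E2 := HD b Hbn.
have E3 := Ht b (ltac:(lia)).
lia.
Qed.

Lemma bigmin_le (i0 : nat) (r : seq nat) t : t \in r -> \big[minn/i0]_(k <- r) p k <= p t.
Proof.
elim: r => [//|x r IH]; rewrite inE big_cons => /orP [/eqP ->|Ht].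
  exact: geq_minl.
by apply: leq_trans (geq_minr _ _) (IH Ht).
Qed.

Lemma pij_le a b t : a <= t < b -> pij p a b <= p t.
Proof. by move=> Ht; apply: bigmin_le; rewrite mem_index_iota. Qed.

Lemma pij_adj k : pij p k k.+1 = p k.
Proof. by rewrite /pij big_ltn // big_geq // minnn. Qed.


Lemma Sg_iff (x : vec n.+1) : tree_semigroup M p x <->
  exists D, consD D /\ forall h : 'I_n.+1, x h = psum (M h) (D h).
Proof.
split.
  case=> [H0|[U [N [[HU1 HU2 HU3 HU4] Hx]]]].
    by exists (fun _ => 0); split => [k _ //|h]; rewrite psum0 H0.
  pose D k := \sum_(1 <= j < N) U j (inord k).
  have HD : forall h : 'I_n.+1, forall j, 0 < j -> U j h = (j <= D h).
    move=> h.
    have [c [Hc1 Hc2]] := @cut_char (fun j => U j h) (fun j Hj => HU2 j h Hj) N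
                            (fun j Hj _ => HU3 j h Hj).
    have -> : D h = c.
      rewrite /D inord_val -(psum_one c) -(sum_cut (fun _ => 1) Hc1).
      by apply: eq_big_nat => j /andP [Hj _]; rewrite Hc2 //; case: (j <= c).
    exact: Hc2.
  exists D; split.
    move=> k Hk.
    have vi : nat_of_ord (inord k : 'I_n.+1) = k by rewrite inordK //; lia.
    have vh : nat_of_ord (inord k.+1 : 'I_n.+1) = k.+1 by rewrite inordK //; lia.
    have Hg : forall j, 0 < j -> j <= p k -> (j <= D k) = (j <= D k.+1).
      move=> j Hj Hjp.
      rewrite -[in LHS]vi -[in RHS]vh -!HD //; apply: HU4 => //.
      rewrite /glued vi vh (minn_idPl (leqnSn k)) (maxn_idPr (leqnSn k)) pij_adj Hjp.
      by rewrite orbT.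
    case: (ltngtP (D k) (D k.+1)) => [Hlt|Hlt|->//].
      case: (leqP (p k) (D k)) => Hp; first lia.
      have := Hg (D k).+1 (ltn0Sn _) Hp; rewrite ltnn Hlt //.
    case: (leqP (p k) (D k.+1)) => Hp; first lia.
    have := Hg (D k.+1).+1 (ltn0Sn _) Hp; rewrite ltnn Hlt //.
  move=> h; rewrite Hx.
  have HDN : D h = 0 \/ D h < N.
    right; rewrite ltnNge; apply/negP => HN.
    have N2 : 1 < N by rewrite ltnNge; apply/negP => H; move: (HU1 h); rewrite HU3.
    by have := HD h N (ltac:(lia)); rewrite HN HU3.
  rewrite -(sum_cut _ HDN).
  by apply: eq_big_nat => j /andP [Hj _]; rewrite HD.
move=> [D [HD Hx]].
case: (boolP [exists h : 'I_n.+1, D h == 0]) => [/existsP [h0 /eqP Hh0]|Hall].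
  left => h; rewrite Hx.
  suff -> : D h = 0 by rewrite psum0.
  have E : forall a b, a <= b -> b <= n -> minn (D a) 1 = minn (D b) 1.
    move=> a b Hab Hbn; apply: consD_range => // t Ht; apply: ppos; lia.
  have := ltn_ord h; have := ltn_ord h0.
  case: (leqP h h0) => Hhh Hh0n Hhn.
    have := E h h0 Hhh (ltac:(lia)); rewrite Hh0; lia.
  have := E h0 h (ltac:(lia)) (ltac:(lia)); rewrite Hh0; lia.
have Hpos : forall h : 'I_n.+1, 0 < D h.
  move=> h; rewrite lt0n; apply/negP => /eqP E.
  by move/negP: Hall; apply; apply/existsP; exists h; rewrite E.
right.
exists (fun j (h : 'I_n.+1) => j <= D h).
exists (\sum_(h < n.+1) D h).+1.
have Hle : forall h : 'I_n.+1, D h <= \sum_(h < n.+1) D h.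
  by move=> h; rewrite (bigD1 h) //=; apply: leq_addr.
split.
  split.
  - exact: Hpos.
  - by move=> j i _ /ltnW.
  - move=> j i Hj; apply/negbTE; rewrite -ltnNge; have := Hle i; lia.
  move=> j i h Hj; rewrite /glued => /orP [/eqP ->//|Hjp].
  have Hm : forall a b : 'I_n.+1, a <= b -> j <= pij p a b ->
      (j <= D a) = (j <= D b).
    move=> a b Hab Hq.
    have := consD_range HD Hab (ltac:(have := ltn_ord b; lia))
       (fun t Ht => pij_le Ht).
    move=> E; apply/idP/idP => H; lia.
  case: (leqP i h) => Hih.
    by apply: Hm => //; move: Hjp; rewrite (minn_idPl Hih) (maxn_idPr Hih).
  by symmetry; apply: Hm; [lia| move: Hjp; rewrite (minn_idPr (ltnW Hih)) (maxn_idPl (ltnW Hih))].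
move=> h; rewrite Hx (sum_cut _ (or_intror _)) //.
have := Hle h; lia.
Qed.


Definition rho (D : nat -> nat) :=
  \sum_(h < n.+1) (D h - (if 0 < h then minn (D h) (p h.-1) else 0)).

Lemma step D D' (k0 : 'I_n.+1) : consD D -> consD D' ->
  (forall h : 'I_n.+1, D h <= D' h) -> D k0 < D' k0 ->
  exists D'', [/\ consD D'', forall h : 'I_n.+1, D h <= D'' h <= D' h,
                  D k0 < D'' k0 & rho D'' = (rho D).+1].
Proof.
move=> HD HD' Hle Hk0.
set j := (D k0).+1.
have k0n : k0 <= n by have := ltn_ord k0; lia.
pose C (h : nat) := (h <= n) &&
  [forall t : 'I_n.+1, ((minn h k0 <= t) && (t < maxn h k0)) ==> (j <= p t)].
have CP : forall h, reflect (h <= n /\ forall t, minn h k0 <= t < maxn h k0 -> j <= p t) (C h).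
  move=> h; apply: (iffP andP) => [[Hh /forallP Ht]|[Hh Ht]]; split => //.
    move=> t Htr; have Htn : t < n.+1 by lia.
    by move/implyP: (Ht (Ordinal Htn)); apply.
  by apply/forallP => t; apply/implyP => Htr; apply: Ht.
have F1 : forall h, C h -> D h = D k0.
  move=> h /CP [Hh Ht]; case: (leqP h k0) => Hhk.
    have := @consD_range D h k0 j HD Hhk k0n (fun t Htr => Ht t (ltac:(lia))); lia.
  have := @consD_range D k0 h j HD (ltnW Hhk) Hh (fun t Htr => Ht t (ltac:(lia))); lia.
have F2 : forall h, C h -> j <= D' h.
  move=> h /CP [Hh Ht]; case: (leqP h k0) => Hhk.
    have := @consD_range D' h k0 j HD' Hhk k0n (fun t Htr => Ht t (ltac:(lia))); lia.
  have := @consD_range D' k0 h j HD' (ltnW Hhk) Hh (fun t Htr => Ht t (ltac:(lia))); lia.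
have E1 : forall k, k < n -> C k -> j <= p k -> C k.+1.
  move=> k Hk /CP [_ Ht] Hp; apply/CP; split; first lia.
  move=> t Htr; case: (t =P k) => [->//|tk]; apply: Ht; lia.
have E2 : forall k, k < n -> C k.+1 -> j <= p k -> C k.
  move=> k Hk /CP [_ Ht] Hp; apply/CP; split; first lia.
  move=> t Htr; case: (t =P k) => [->//|tk]; apply: Ht; lia.
have Ck0 : C k0 by apply/CP; split => // t; lia.
pose D'' h := if C h then j else D h.
exists D''; split.
- move=> k Hk; rewrite /D''.
  case Ck: (C k); case Ck1: (C k.+1) => //.
  + have Hp : p k < j.
      by rewrite ltnNge; apply/negP => Hp; move: (E1 k Hk Ck Hp); rewrite Ck1.
    have := F1 k Ck; have := HD k Hk; lia.
  + have Hp : p k < j.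
      by rewrite ltnNge; apply/negP => Hp; move: (E2 k Hk Ck1 Hp); rewrite Ck.
    have := F1 k.+1 Ck1; have := HD k Hk; lia.
  + exact: HD.
- move=> h; rewrite /D''; case Ch: (C h).
    by have := F1 h Ch; have := F2 h Ch; lia.
  by rewrite leqnn Hle.
- by rewrite /D'' Ck0.
have term : forall h : 'I_n.+1,
    D'' h - (if 0 < h then minn (D'' h) (p h.-1) else 0) =
    (D h - (if 0 < h then minn (D h) (p h.-1) else 0)) +
    (C h && ((nat_of_ord h == 0) || (p h.-1 < j))).
  move=> h; rewrite /D''; case Ch: (C h); last by rewrite addn0.
  have := F1 h Ch; case: (posnP h) => Hh0 E.
    by rewrite Hh0 /= in E *; lia.
  by case: (ltnP (p h.-1) j) => Hp /=; lia.
suff Hs : \sum_(i < n.+1) (C i && ((nat_of_ord i == 0) || (p i.-1 < j))) = 1 by rewrite /rho (eq_bigr _ (fun h _ => term h)) big_split /= Hs addn1.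
have exC : exists h, C h by exists (nat_of_ord k0).
case: (ex_minnP exC) => hs Chs Hmin.
have hsn : hs < n.+1 by move/CP: Chs => [? _]; lia.
have Lhs : (hs == 0) || (p hs.-1 < j).
  case: (posnP hs) => [->//|Hh0] /=.
  rewrite ltnNge; apply/negP => Hp.
  have Hc : C hs.-1 by apply: E2; [lia| rewrite prednK| ].
  have := Hmin _ Hc; lia.
have Uq : forall h, C h -> (h == 0) || (p h.-1 < j) -> h = hs.
  move=> h Ch Lh; have := Hmin h Ch; rewrite leq_eqVlt => /orP [/eqP //|Hlt].
  move: Lh; have -> : (h == 0) = false by lia.
  rewrite /= ltnNge => /negP H; exfalso; apply: H.
  move/CP: Chs => [_ Ht1]; move/CP: Ch => [_ Ht2].
  case: (leqP h k0) => Hhk; [apply: Ht1 | apply: Ht2]; lia.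
rewrite (bigD1 (Ordinal hsn)) //= Chs Lhs big1 ?addn0 // => h Hh.
case E: (C h && _) => //; move/andP: E => [Ch Lh].
exfalso; move: Hh => /negP H; apply: H; apply/eqP; apply: val_inj => /=; exact: Uq.
Qed.


Definition PD (D : nat -> nat) : vec n.+1 := fun h => psum (M h) (D h).
Definition sigma (D : nat -> nat) := \sum_(h < n.+1) D h.

Lemma rho_ext (D D' : nat -> nat) : (forall h : 'I_n.+1, D h = D' h) -> rho D = rho D'.
Proof. by move=> H; apply: eq_bigr => h _; rewrite H. Qed.

Lemma sigma_lt (D D' : nat -> nat) (k : 'I_n.+1) : (forall h : 'I_n.+1, D h <= D' h) -> D k < D' k ->
  sigma D < sigma D'.
Proof.
move=> Hle Hk; rewrite /sigma (bigD1 k) //= [X in _ < X](bigD1 k) //=.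
rewrite -addSn; apply: leq_add => //; apply: leq_sum => i _; exact: Hle.
Qed.

Lemma rho_strict (D D' : nat -> nat) : consD D -> consD D' -> (forall h : 'I_n.+1, D h <= D' h) ->
  (exists k : 'I_n.+1, D k < D' k) -> rho D < rho D'.
Proof.
move=> HD HD'.
suff H : forall m D, sigma D' - sigma D <= m -> consD D ->
  (forall h : 'I_n.+1, D h <= D' h) -> (exists k : 'I_n.+1, D k < D' k) -> rho D < rho D'.
  by apply: H.
elim=> [|m IH] {}D Hm {}HD Hle [k Hk].
  have := sigma_lt Hle Hk; lia.
have [D'' [HD'' Hb Hk'' Hr]] := step HD HD' Hle Hk.
case: (boolP [forall h : 'I_n.+1, D'' h == D' h]) => [/forallP Heq|].
  rewrite -(@rho_ext D'' D') ?Hr // => h; exact/eqP.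
rewrite negb_forall => /existsP [h Hh]; have {}Hh : D'' h <> D' h by apply/eqP.
have Hb1 : forall h : 'I_n.+1, D h <= D'' h by move=> i; have := Hb i; lia.
have Hb2 : forall h : 'I_n.+1, D'' h <= D' h by move=> i; have := Hb i; lia.
have := sigma_lt Hb1 Hk''.
have Hlt : D'' h < D' h by have := Hb2 h; lia.
have Hms : sigma D' - sigma D'' <= m by have := sigma_lt Hb1 Hk''; lia.
have := @IH D'' Hms HD'' Hb2 (ex_intro _ h Hlt).
lia.
Qed.

Lemma vle_iff (x y : vec n.+1) (D D' : nat -> nat) : (forall h, x h = psum (M h) (D h)) ->
  (forall h, y h = psum (M h) (D' h)) ->
  vle x y <-> forall h : 'I_n.+1, D h <= D' h.
Proof.
move=> Hx Hy; split => H h; have := H h; rewrite Hx Hy psum_leE //; exact: Mpos.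
Qed.

Lemma lt_iff (x y : vec n.+1) (D D' : nat -> nat) (h : 'I_n.+1) : x h = psum (M h) (D h) ->
  y h = psum (M h) (D' h) -> (x h < y h) = (D h < D' h).
Proof.
by move=> Hx Hy; rewrite Hx Hy !ltnNge psum_leE //; exact: Mpos.
Qed.

Lemma vlt_iff (x y : vec n.+1) (D D' : nat -> nat) : (forall h, x h = psum (M h) (D h)) ->
  (forall h, y h = psum (M h) (D' h)) ->
  vlt x y <-> (forall h : 'I_n.+1, D h <= D' h) /\ exists k : 'I_n.+1, D k < D' k.
Proof.
move=> Hx Hy; split => [[H1 [k Hk]]|[H1 [k Hk]]]; split.
- exact/(vle_iff Hx Hy).
- by exists k; rewrite -(lt_iff (Hx k) (Hy k)).
- exact/(vle_iff Hx Hy).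
- by exists k; rewrite (lt_iff (Hx k) (Hy k)).
Qed.

Lemma cover_rho (x y : vec n.+1) (D D' : nat -> nat) : consD D -> consD D' ->
  (forall h, x h = psum (M h) (D h)) -> (forall h, y h = psum (M h) (D' h)) ->
  vlt x y -> ~ (exists t, [/\ tree_semigroup M p t, vlt x t & vlt t y]) ->
  rho D' = (rho D).+1.
Proof.
move=> HD HD' Hx Hy /(vlt_iff Hx Hy) [Hle [k Hk]] Hno.
have [D'' [HD'' Hb Hk'' Hr]] := step HD HD' Hle Hk.
case: (boolP [forall h : 'I_n.+1, D'' h == D' h]) => [/forallP Heq|].
  rewrite -(@rho_ext D'' D') ?Hr // => h; exact/eqP.
rewrite negb_forall => /existsP [h Hh]; have {}Hh : D'' h <> D' h by apply/eqP.
exfalso; apply: Hno; exists (PD D''); split.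
- by apply/Sg_iff; exists D''.
- apply/(vlt_iff Hx (fun h => erefl)); split; last by exists k.
  by move=> i; have := Hb i; lia.
- apply/(vlt_iff (fun h => erefl) Hy); split; first by move=> i; have := Hb i; lia.
  by exists h; have := Hb h; lia.
Qed.

Lemma rho0 : rho (fun _ => 0) = 0.
Proof. by rewrite /rho big1. Qed.

Lemma chain_rho d m s : sat_chain (tree_semigroup M p) d m s ->
  forall k, k <= m -> exists D, [/\ consD D, forall h, s k h = psum (M h) (D h) & rho D = k].
Proof.
move=> [H0 Hm HS Hc]; elim=> [|k IH] Hk.
  by exists (fun _ => 0); split; [by [] | move=> h; rewrite psum0 H0 | exact: rho0].
have [D [HD Hs Hr]] := IH (ltnW Hk).
have [D' [HD' Hs']] := (Sg_iff (s k.+1)).1 (HS _ Hk).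
exists D'; split => //.
have [Hlt Hno] := Hc k Hk.
by rewrite (cover_rho HD HD' Hs Hs' Hlt Hno) Hr.
Qed.

Lemma chain_ex e : consD e -> forall D, consD D -> (forall h : 'I_n.+1, D h <= e h) ->
  exists m s, [/\ forall h, s 0 h = psum (M h) (D h),
                  forall h, s m h = psum (M h) (e h),
                  forall k, k <= m -> tree_semigroup M p (s k)
                & forall k, k < m -> vlt (s k) (s k.+1) /\
                    ~ (exists t, [/\ tree_semigroup M p t, vlt (s k) t & vlt t (s k.+1)])].
Proof.
move=> He.
suff H : forall N D, sigma e - sigma D <= N -> consD D -> (forall h : 'I_n.+1, D h <= e h) ->
  exists m s, [/\ forall h, s 0 h = psum (M h) (D h),
                  forall h, s m h = psum (M h) (e h),
                  forall k, k <= m -> tree_semigroup M p (s k)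
                & forall k, k < m -> vlt (s k) (s k.+1) /\
                    ~ (exists t, [/\ tree_semigroup M p t, vlt (s k) t & vlt t (s k.+1)])].
  by move=> D; apply: H.
elim=> [|N IH] D HN HD Hle;
  (case: (boolP [forall h : 'I_n.+1, D h == e h]) => [/forallP Heq|]).
- exists 0, (fun _ => PD D); split => //.
  + by move=> h; rewrite /PD (eqP (Heq h)).
  + by move=> k _; apply/Sg_iff; exists D.
- rewrite negb_forall => /existsP [k Hk]; have {}Hk : D k <> e k by apply/eqP.
  have Hk' : D k < e k by have := Hle k; lia.
  have := sigma_lt Hle Hk'; lia.
- exists 0, (fun _ => PD D); split => //.
  + by move=> h; rewrite /PD (eqP (Heq h)).
  + by move=> k _; apply/Sg_iff; exists D.
rewrite negb_forall => /existsP [k Hk]; have {}Hk : D k <> e k by apply/eqP.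
have Hk' : D k < e k by have := Hle k; lia.
have [D'' [HD'' Hb Hk'' Hr]] := step HD He Hle Hk'.
have Hb1 : forall h : 'I_n.+1, D h <= D'' h by move=> i; have := Hb i; lia.
have Hb2 : forall h : 'I_n.+1, D'' h <= e h by move=> i; have := Hb i; lia.
have := sigma_lt Hb1 Hk''.
move=> Hsig.
have [m [s [Hs0 Hsm HsS Hsc]]] := IH D'' (ltac:(lia)) HD'' Hb2.
exists m.+1, (fun k => if k is k'.+1 then s k' else PD D); split => //.
- by case=> [_|k' Hk1]; [apply/Sg_iff; exists D | apply: HsS].
case=> [_|k' Hk1]; last by apply: Hsc.
split.
  by apply/(vlt_iff (fun h => erefl) Hs0); split => //; exists k.
move=> [t [Ht H1 H2]].
have [DT [HDT HtD]] := (Sg_iff t).1 Ht.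
have /(vlt_iff (fun h => erefl) HtD) [L1 L2] := H1.
have /(vlt_iff HtD Hs0) [L3 L4] := H2.
have := rho_strict HD HDT L1 L2.
have := rho_strict HDT HD'' L3 L4.
lia.
Qed.


Variable l : 'I_n.+1 -> nat.
Hypothesis Hl : forall h, mlength (M h) (l h).

Definition ee (k : nat) := maxn (l (inord k))
  (maxn (if 0 < k then p k.-1 else 0) (if k < n then p k else 0)).
Definition delta : vec n.+1 := fun h => psum (M h) (ee h).

Lemma ee_ge1 k : k < n -> p k <= ee k.
Proof. by move=> Hk; rewrite /ee Hk; lia. Qed.

Lemma ee_ge2 k : k < n -> p k <= ee k.+1.
Proof. by move=> Hk; rewrite /ee /=; lia. Qed.

Lemma ee_l (h : 'I_n.+1) : l h <= ee h.
Proof. by rewrite /ee inord_val; lia. Qed.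

Lemma ee_cons : consD ee.
Proof. by move=> k Hk; have := ee_ge1 Hk; have := ee_ge2 Hk; lia. Qed.

Lemma psum_ee (h : 'I_n.+1) t : psum (M h) (ee h + t) = psum (M h) (ee h) + t.
Proof.
have Ht := (Hl h).1.
rewrite (psum_tail Ht) ?(psum_tail Ht (ee_l h)); have := ee_l h; lia.
Qed.

Lemma cond_vec : conductor_vec (tree_semigroup M p) delta.
Proof.
move=> x Hx; apply/Sg_iff.
exists (fun k => ee k + (x (inord k) - delta (inord k))); split.
  by move=> k Hk; have := ee_ge1 Hk; have := ee_ge2 Hk; lia.
move=> h; rewrite inord_val psum_ee; have := Hx h; rewrite /delta; lia.
Qed.

Lemma cond_min d' : conductor_vec (tree_semigroup M p) d' -> vle delta d'.
Proof.
move=> Hd' h; rewrite leqNgt; apply/negP => Hlt.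
pose x : vec n.+1 := fun i => if i == h then (delta h).-1 else maxn (d' i) (delta i).
have Hx : vle d' x.
  move=> i; rewrite /x; case: (i =P h) => [->|_]; [lia | exact: leq_maxl].
have [D [HD HxD]] := (Sg_iff x).1 (Hd' x Hx).
have Hoth : forall k, k <= n -> k != h -> ee k <= D k.
  move=> k Hk Hkh.
  have Hk' : k < n.+1 by lia.
  have := HxD (Ordinal Hk'); rewrite /x.
  have -> : (Ordinal Hk' == h) = false.
    by apply/negbTE; apply: contra Hkh => /eqP <-.
  move=> E.
  have : psum (M (Ordinal Hk')) (ee k) <= psum (M (Ordinal Hk')) (D k).
    by rewrite -[X in _ <= X]E /delta /=; apply: leq_maxr.
  by rewrite psum_leE //; apply: Mpos.
have Hh : psum (M h) (D h) = (delta h).-1 by rewrite -HxD /x eqxx.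
have hn : (h : nat) <= n by have := ltn_ord h; lia.
case: (boolP ((0 < h) && (D h < p h.-1))) => [/andP [H0 H1]|C1].
  have Hk : h.-1 < n by lia.
  have := HD _ Hk; rewrite prednK //.
  have := Hoth h.-1 (ltac:(lia)) (ltac:(lia)).
  have := ee_ge1 Hk; lia.
case: (boolP ((h < n) && (D h < p h))) => [/andP [H0 H1]|C2].
  have := HD _ H0.
  have := Hoth h.+1 H0 (ltac:(lia)).
  have := ee_ge2 H0; lia.
have HDe : D h < ee h.
  have : psum (M h) (D h) < psum (M h) (ee h) by move: Hlt; rewrite Hh /delta; lia.
  by rewrite ltnNge psum_leE ?ltnNge //; apply: Mpos.
have A1 : (if 0 < h then p h.-1 else 0) <= D h.
  by case: ifP => // H0; move: C1; rewrite H0 /= -leqNgt.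
have A2 : (if h < n then p h else 0) <= D h.
  by case: ifP => // H0; move: C2; rewrite H0 /= -leqNgt.
have HDl : D h < l h.
  move: HDe A1 A2; rewrite /ee inord_val; lia.
have [Ht Hm] := Hl h.
have Hl0 : 0 < l h by lia.
have Hm2 : 1 < M h (l h).
  case: Hm => [|Hm]; first lia.
  have := Mpos h Hl0; lia.
have E1 : psum (M h) (D h) <= psum (M h) (l h).-1 by rewrite psum_leE //; [lia | apply: Mpos].
have E2 : psum (M h) (l h) = psum (M h) (l h).-1 + M h (l h) by have := psumS (M h) (l h).-1; rewrite prednK.
have E3 : psum (M h) (l h) <= psum (M h) (ee h) by rewrite psum_leE //; [exact: ee_l | apply: Mpos].
move: Hh Hlt; rewrite /delta; lia.
Qed.

Lemma main_sec : good_genus (tree_semigroup M p)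
  (\sum_(k < n.+1) (psum (M k) (l k) - l k) + \sum_(k < n) p k).
Proof.
split.
  have [m [s [Hs0 Hsm HsS Hsc]]] := chain_ex ee_cons (D := fun _ => 0) (fun k _ => erefl)
     (fun h => leq0n _).
  exists delta, m, s; split; first by split; [exact: cond_vec | exact: cond_min].
  split; [by move=> i; rewrite Hs0 psum0 | exact: Hsm | exact: HsS | exact: Hsc].
move=> d m s [Hd Hdmin] Hs.
have Edd : forall h, d h = delta h.
  move=> h; apply/eqP; rewrite eqn_leq; apply/andP; split.
    exact: (Hdmin _ cond_vec).
  exact: (cond_min Hd).
have [D [HD HsD Hr]] := chain_rho Hs (leqnn m).
have DE : forall h : 'I_n.+1, D h = ee h.
  move=> h; apply: (@psum_inj (M h)); first exact: Mpos.
  by rewrite -HsD; case: Hs => _ -> _ _; rewrite Edd.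
rewrite -Hr (rho_ext DE) (eq_bigr _ (fun h _ => Edd h)).
pose q (h : nat) := if 0 < h then p h.-1 else 0.
have Hq : forall h : 'I_n.+1, q h <= ee h.
  move=> h; rewrite /q; case: (posnP h) => [->//|H0].
  have := ee_ge2 (k := h.-1) (ltac:(have := ltn_ord h; lia)); rewrite prednK //.
have -> : rho ee = \sum_(h < n.+1) (ee h - q h).
  apply: eq_bigr => h _; rewrite /q; case: (posnP h) => [->//|H0].
  have := ee_ge2 (k := h.-1) (ltac:(have := ltn_ord h; lia)); rewrite prednK // => H.
  by rewrite (minn_idPr H).
have Hqe : \sum_(h < n.+1) q h <= \sum_(h < n.+1) ee h.
  by apply: leq_sum => h _; exact: Hq.
rewrite (sumnB _ (fun h _ => Hq h)).
have Eq : \sum_(h < n.+1) q h = \sum_(k < n) p k.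
  by rewrite big_ord_recl /q /=; apply: eq_bigr.
rewrite Eq in Hqe *.
have -> : \sum_(h < n.+1) delta h =
          \sum_(h < n.+1) (psum (M h) (l h) - l h) + \sum_(h < n.+1) ee h.
  rewrite -big_split; apply: eq_bigr => h _ /=.
  rewrite /delta (psum_tail (Hl h).1 (ee_l h)).
  have := psum_ge (Mpos h) (l h); have := ee_l h; lia.
set A := \sum_(h < n.+1) ee h in Hqe *. set B := \sum_(k < n) p k in Hqe *. set G := \sum_(k < n.+1) (psum (M k) (l k) - l k). lia.
Qed.

End Tree.

Theorem mainTheorem1 (r : nat) (hr : 1 <= r)
  (M : 'I_r -> nat -> nat) (p : nat -> nat) (g : 'I_r -> nat) :
  (forall i, is_mult_seq (M i)) ->
  (forall k, k < r.-1 -> 1 <= p k) ->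
  good_semigroup (tree_semigroup M p) ->
  local_sg (tree_semigroup M p) ->
  arf_sg (tree_semigroup M p) ->
  (forall k, ns_genus (AS (M k)) (g k)) ->
  good_genus (tree_semigroup M p) (\sum_(k < r) g k + \sum_(k < r.-1) p k).
Proof.
case: r hr M g => [//|n] _ M g HM Hp _ _ _ Hg.
have Mpos : forall h i, 0 < i -> 0 < M h i by move=> h i Hi; case: (HM h) => H _ _ _; exact: H.
have [l Hl] : exists l : 'I_n.+1 -> nat, forall h, mlength (M h) (l h).
  apply: (@fin_all_exists _ (fun _ => nat) (fun h lh => mlength (M h) lh)) => h; case: (HM h) => _ _ [N HN] _; exact: mlength_ex HN.
have -> : \sum_(k < n.+1) g k = \sum_(k < n.+1) (psum (M k) (l k) - l k).
  apply: eq_bigr => h _; exact: (genus_AS (Mpos h) (Hl h) (Hg h)).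
exact: (main_sec Mpos Hp Hl).
Qed.
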